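(* Let $0<q<1$ and let $s_1,\dots,s_m$ be positive integers with $s_1>1$. Then \[ \sum_{k=1}^m \zeta[s_1,\dots,s_{k-1},1+s_k,s_{k+1},\dots,s_m] = \sum_{k=1}^m \sum_{j=0}^{s_k-2}\zeta[s_1,\dots,s_{k-1},s_k-j,j+1,s_{k+1},\dots,s_m], \] where the inner sum on the right is zero if $s_k<2$.
   Context: Fix $0<q<1$. For real $x$, $[x]_q := (1-q^x)/(1-q)$. For positive integers $s_1,\dots,s_N$ with $s_1>1$, $\zeta[s_1,\dots,s_N] := \sum_{k_1>\cdots>k_N>0}\prod_{j=1}^N q^{(s_j-1)k_j}/[k_j]_q^{s_j}$ (sum over positive integers). *)

(* Defs.v *)
From Stdlib Require Import Reals List.
From Coquelicot Require Import Coquelicot.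
Import ListNotations.
Open Scope R_scope.

Definition qint (q : R) (k : nat) : R := (1 - q ^ k) / (1 - q).

Definition zterm (q : R) (s k : nat) : R := q ^ ((s - 1) * k) / (qint q k) ^ s.

Definition lsum (l : list nat) (f : nat -> R) : R := fold_right Rplus 0 (map f l).

(* truncated sum: sum over M > k_1 > k_2 > ... > k_N > 0 *)
Fixpoint zeta_trunc (q : R) (s : list nat) (M : nat) : R :=
  match s with
  | [] => 1
  | a :: s' =>
      fold_right Rplus 0
        (map (fun k => zterm q a k * zeta_trunc q s' k) (seq 1 (Nat.pred M)))
  end.

(* zeta[s_1,...,s_N] = sum_{k_1 > ... > k_N > 0} prod_j q^{(s_j-1)k_j}/[k_j]_q^{s_j},
   the value of the series of nonnegative terms, i.e. the limit of the
   (nondecreasing) truncations k_1 < M as M -> oo. *)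
Definition qzeta (q : R) (s : list nat) : R := real (Lim_seq (fun M => zeta_trunc q s M)).

(* Main.v *)
Require Import Defs.
From Stdlib Require Import Reals List Lia Lra.
From Coquelicot Require Import Coquelicot.
Import ListNotations.
Open Scope R_scope.

Definition sm (n : nat) (f : nat -> R) : R := fold_right Rplus 0 (map f (seq 1 (Nat.pred n))).

Lemma fold_c (l : list R) c : fold_right Rplus c l = fold_right Rplus 0 l + c.
Proof. induction l; simpl; lra. Qed.

Lemma sm0 f : sm 0 f = 0. Proof. reflexivity. Qed.
Lemma sm1 f : sm 1 f = 0. Proof. reflexivity. Qed.
Lemma smS n f : (1 <= n)%nat -> sm (S n) f = sm n f + f n.
Proof.
  intros H. destruct n as [|n]; [lia|]. unfold sm. simpl Nat.pred.
  rewrite seq_S, map_app, fold_right_app. simpl. rewrite fold_c.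
  replace (1 + n)%nat with (S n) by lia. lra.
Qed.

Lemma sm_ext n f g : (forall k, (1 <= k < n)%nat -> f k = g k) -> sm n f = sm n g.
Proof.
  intros H. unfold sm. f_equal. apply map_ext_in. intros a Ha.
  apply in_seq in Ha. apply H. lia.
Qed.

Lemma sm_ind (P : nat -> Prop) : P 0%nat -> P 1%nat -> (forall n, (1 <= n)%nat -> P n -> P (S n)) -> forall n, P n.
Proof. intros H0 H1 HS n. induction n as [|[|n] IH]; auto. apply HS; auto; lia. Qed.

Lemma sm_plus n f g : sm n (fun k => f k + g k) = sm n f + sm n g.
Proof. induction n using sm_ind; [unfold sm; simpl; lra|unfold sm; simpl; lra|]. rewrite !smS by lia. lra. Qed.
Lemma sm_minus n f g : sm n (fun k => f k - g k) = sm n f - sm n g.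
Proof. induction n using sm_ind; [unfold sm; simpl; lra|unfold sm; simpl; lra|]. rewrite !smS by lia. lra. Qed.
Lemma sm_scal n c f : sm n (fun k => c * f k) = c * sm n f.
Proof. induction n using sm_ind; [unfold sm; simpl; lra|unfold sm; simpl; lra|]. rewrite !smS by lia. lra. Qed.
Lemma sm_scalr n c f : sm n (fun k => f k * c) = sm n f * c.
Proof. induction n using sm_ind; [unfold sm; simpl; lra|unfold sm; simpl; lra|]. rewrite !smS by lia. lra. Qed.
Lemma sm_opp n f : sm n (fun k => - f k) = - sm n f.
Proof. induction n using sm_ind; [unfold sm; simpl; lra|unfold sm; simpl; lra|]. rewrite !smS by lia. lra. Qed.
Lemma sm_zero n : sm n (fun _ => 0) = 0.
Proof. induction n using sm_ind; [reflexivity|reflexivity|]. rewrite !smS by lia. lra. Qed.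
Lemma sm_le n f g : (forall k, (1 <= k < n)%nat -> f k <= g k) -> sm n f <= sm n g.
Proof. induction n using sm_ind; intros Hh; [unfold sm; simpl; lra|unfold sm; simpl; lra|].
  rewrite !smS by lia. assert (f n <= g n) by (apply Hh; lia).
  assert (sm n f <= sm n g) by (apply IHn; intros; apply Hh; lia). lra. Qed.
Lemma sm_tele n u : (1 <= n)%nat -> sm n (fun p => u p - u (S p)) = u 1%nat - u n.
Proof. induction n using sm_ind; intros Hh; [lia| unfold sm; simpl; lra|].
  rewrite smS by lia. destruct (Nat.eq_dec n 1) as [->|]. unfold sm; simpl; lra.
  rewrite IHn by lia. lra. Qed.

Lemma lsum_sm (l : list nat) n F : lsum l (fun j => sm n (fun p => F j p)) = sm n (fun p => lsum l (fun j => F j p)).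
Proof. induction l; simpl. unfold lsum; simpl. now rewrite sm_zero.
  unfold lsum in *; simpl. rewrite IHl, <- sm_plus. reflexivity. Qed.
Lemma lsum_scalr (l : list nat) c f : lsum l (fun j => f j * c) = lsum l f * c.
Proof. induction l; unfold lsum in *; simpl; [lra|]. rewrite IHl. lra. Qed.
Lemma lsum_scal (l : list nat) c f : lsum l (fun j => c * f j) = c * lsum l f.
Proof. induction l; unfold lsum in *; simpl; [lra|]. rewrite IHl. lra. Qed.

Section Q.
Variable q : R.
Hypothesis hq0 : 0 < q.
Hypothesis hq1 : q < 1.

Lemma powq_le1 m : q ^ m <= 1.
Proof. induction m; simpl; [lra|]. nra. Qed.
Lemma powq_pos m : 0 < q ^ m.
Proof. apply pow_lt; lra. Qed.
Lemma powq_lt1 m : (1 <= m)%nat -> q ^ m < 1.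
Proof. intros H. destruct m; [lia|]. simpl. pose proof (powq_le1 m). nra. Qed.

Lemma qint_ge1 k : (1 <= k)%nat -> 1 <= qint q k.
Proof. intros H. unfold qint. destruct k; [lia|]. simpl. pose proof (powq_le1 k).
  apply Rcomplements.Rle_div_r; nra. Qed.
Lemma qint_pos k : (1 <= k)%nat -> 0 < qint q k.
Proof. intros H; pose proof (qint_ge1 k H); lra. Qed.

Lemma qint_add d p : qint q (d + p) = qint q d + q ^ d * qint q p.
Proof. unfold qint. rewrite pow_add. field. lra. Qed.

Definition h (m : nat) : R := q ^ m / qint q m.
Definition HH (k : nat) : R := sm (S k) h.
Definition Phi (N p : nat) : R := HH (N - 1) - HH (N - 1 - p).

Lemma HH_S k : HH (S k) = HH k + h (S k).
Proof. unfold HH. rewrite (smS (S k)) by lia. reflexivity. Qed.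
Lemma HH_0 : HH 0 = 0.
Proof. reflexivity. Qed.

Lemma inv_qint m : (1 <= m)%nat -> 1 / qint q m = h m + (1 - q).
Proof. intros H. unfold h, qint. pose proof (powq_lt1 m H). field. split; lra. Qed.

Lemma h_nonneg m : (1 <= m)%nat -> 0 <= h m.
Proof. intros H. unfold h. pose proof (qint_pos m H). pose proof (powq_pos m).
  apply Rlt_le, Rdiv_lt_0_compat; lra. Qed.
Lemma h_le m : (1 <= m)%nat -> h m <= q ^ m.
Proof. intros H. unfold h. pose proof (qint_ge1 m H). pose proof (powq_pos m).
  apply Rcomplements.Rle_div_l; [lra|]. assert (0 <= q^m * (qint q m - 1)) by (apply Rmult_le_pos; lra). nra. Qed.

Lemma zterm_S b k : (1 <= b)%nat -> (1 <= k)%nat -> zterm q (S b) k = zterm q b k * h k.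
Proof. intros Hb Hk. unfold zterm, h. destruct b as [|b]; [lia|].
  replace (S (S b) - 1)%nat with (S b) by lia. replace (S b - 1)%nat with b by lia.
  rewrite Nat.mul_succ_l, pow_add.
  pose proof (qint_pos k Hk). simpl. field. split; [lra|]. apply pow_nonzero; lra. Qed.

Lemma zterm_1 k : zterm q 1 k = 1 / qint q k.
Proof. unfold zterm. simpl. rewrite Rmult_1_r. reflexivity. Qed.

Lemma zterm_nonneg b k : (1 <= k)%nat -> 0 <= zterm q b k.
Proof. intros Hk. unfold zterm. pose proof (qint_pos k Hk). apply Rlt_le, Rdiv_lt_0_compat.
  apply powq_pos. apply pow_lt; lra. Qed.
Lemma zterm_le1 b k : (1 <= k)%nat -> zterm q b k <= 1.
Proof. intros Hk. unfold zterm. pose proof (qint_ge1 k Hk). pose proof (pow_R1_Rle _ b H).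
  pose proof (powq_le1 ((b-1)*k)). apply Rcomplements.Rle_div_l; nra. Qed.
Lemma zterm_leq b k : (2 <= b)%nat -> (1 <= k)%nat -> zterm q b k <= q ^ k.
Proof. intros Hb Hk. unfold zterm. pose proof (qint_ge1 k Hk). pose proof (pow_R1_Rle _ b H).
  replace ((b-1)*k)%nat with (k + (b-2)*k)%nat by nia. rewrite pow_add.
  pose proof (powq_le1 ((b-2)*k)). pose proof (powq_pos k).
  apply Rcomplements.Rle_div_l; nra. Qed.

Lemma Kid_d a d p : (1 <= a)%nat -> (1 <= d)%nat -> (1 <= p)%nat ->
  lsum (seq 0 (a - 1)) (fun j => zterm q (a - j) (d + p) * zterm q (j + 1) p)
  = zterm q a p * (1 / qint q d - 1 / qint q (d + p)) - zterm q a (d + p) * h d.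
Proof.
  intros Ha Hd Hp. induction a as [|a IH]; [lia|].
  destruct a as [|a].
  - simpl. unfold lsum. simpl. rewrite !zterm_1. unfold h. rewrite qint_add.
    pose proof (qint_pos d Hd). pose proof (qint_pos p Hp). pose proof (powq_pos d).
    field. split; [lra|]. split; [|lra]. nra.
  - replace (S (S a) - 1)%nat with (S a) by lia. simpl seq.
    rewrite <- seq_shift. unfold lsum in *. cbn [map fold_right]. rewrite map_map.
    replace (S a - 1)%nat with a in IH by lia.
    erewrite (map_ext _ (fun x => (zterm q (S a - x) (d + p) * zterm q (x + 1) p) * h p)).
    2:{ intros j. replace (S (S a) - S j)%nat with (S a - j)%nat by lia.
      replace (S j + 1)%nat with (S (j + 1)) by lia.
      rewrite zterm_S by lia. ring. }
    fold (lsum (seq 0 a) (fun x => zterm q (S a - x) (d + p) * zterm q (x + 1) p * h p)).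
    rewrite lsum_scalr. unfold lsum. rewrite IH by lia.
    replace (S (S a) - 0)%nat with (S (S a)) by lia. replace (0 + 1)%nat with 1%nat by lia.
    rewrite (zterm_S (S a) (d+p)) by lia. rewrite (zterm_S (S a) p) by lia.
    rewrite zterm_1. unfold h. rewrite qint_add. rewrite pow_add.
    pose proof (qint_pos d Hd). pose proof (qint_pos p Hp). pose proof (powq_pos d). pose proof (powq_pos p).
    field. split; [lra|]. split; [|lra]. nra.
Qed.

Lemma conv (Y y : nat -> R) c : (forall n, Y n = c + sm n y) -> forall N, (1 <= N)%nat ->
  sm N (fun p => h (N - p) * Y p) + sm N (fun p => y p * Phi N p) = Y N * HH (N - 1).
Proof.
  intros HY N HN.
  pose (u := fun p => Y p * HH (N - p)).
  assert (T := sm_tele N u HN).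
  rewrite (sm_ext N (fun p => u p - u (S p)) (fun p => h (N - p) * Y p - y p * HH (N - 1 - p))) in T.
  2:{ intros k Hk. unfold u. replace (N - k)%nat with (S (N - 1 - k)) by lia.
      replace (N - S k)%nat with (N - 1 - k)%nat by lia. rewrite HH_S.
      rewrite (HY (S k)), (HY k), smS by lia. ring. }
  rewrite sm_minus in T. unfold u in T. replace (N - 1)%nat with (N - 1)%nat in T by reflexivity.
  replace (N - N)%nat with 0%nat in T by lia. rewrite HH_0 in T.
  rewrite (HY 1%nat), sm1 in T.
  unfold Phi. rewrite (sm_ext N (fun p => y p * (HH (N - 1) - HH (N - 1 - p))) (fun p => y p * HH (N - 1) - y p * HH (N - 1 - p))) by (intros; ring).
  rewrite sm_minus, sm_scalr. rewrite (HY N). lra.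
Qed.

Lemma Phi_S N n : (1 <= n < N)%nat -> Phi (S N) n = Phi N n + (h N - h (N - n)).
Proof. intros H. unfold Phi. replace (S N - 1)%nat with (S (N - 1)) by lia.
  replace (S (N - 1) - n)%nat with (S (N - 1 - n)) by lia. rewrite !HH_S.
  replace (S (N - 1)) with N by lia. replace (S (N - 1 - n)) with (N - n)%nat by lia. ring. Qed.

Lemma Phi_top N : (1 <= N)%nat -> Phi (S N) N = HH (N - 1) + h N.
Proof. intros H. unfold Phi. replace (S N - 1 - N)%nat with 0%nat by lia. rewrite HH_0.
  replace (S N - 1)%nat with (S (N - 1)) by lia. rewrite HH_S. replace (S (N-1)) with N by lia. ring. Qed.

Lemma GL a (Ha : (1 <= a)%nat) (Y y Dy : nat -> R) c :
  (forall n, Y n = c + sm n y) -> (forall n, Dy n = sm n (fun p => y p * Phi n p)) ->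
  forall N,
  sm N (fun n => sm n (fun p => lsum (seq 0 (a - 1)) (fun j => zterm q (a - j) n * zterm q (j + 1) p) * Y p))
  - sm N (fun n => zterm q (S a) n * Y n)
  - sm N (fun n => zterm q a n * Dy n)
  = - sm N (fun n => zterm q a n * Y n * Phi N n).
Proof.
  intros HY HD N. induction N as [| |N HN IH] using sm_ind.
  - unfold sm; simpl; lra.
  - unfold sm; simpl; lra.
  - rewrite !smS by lia.
    rewrite (sm_ext N (fun n0 => zterm q a n0 * Y n0 * Phi (S N) n0)
       (fun n0 => zterm q a n0 * Y n0 * Phi N n0 + zterm q a n0 * Y n0 * (h N - h (N - n0)))).
    2:{ intros k Hk. rewrite Phi_S by lia. ring. }
    rewrite sm_plus.
    rewrite (sm_ext N (fun p => lsum (seq 0 (a - 1)) (fun j => zterm q (a - j) N * zterm q (j + 1) p) * Y p)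
       (fun p => - (zterm q a p * Y p * (h N - h (N - p))) - zterm q a N * (h (N - p) * Y p))).
    2:{ intros k Hk. pose proof (Kid_d a (N-k) k Ha ltac:(lia) ltac:(lia)) as K.
        replace (N - k + k)%nat with N in K by lia. rewrite K. rewrite !inv_qint by lia. ring. }
    rewrite sm_minus, sm_opp, sm_scal.
    pose proof (conv Y y c HY N HN) as Hc. rewrite <- HD in Hc.
    rewrite Phi_top by lia. rewrite zterm_S by lia.
    assert (E : sm N (fun p => h (N - p) * Y p) = Y N * HH (N - 1) - Dy N) by lra.
    rewrite E. lra.
Qed.

Definition LT (s : list nat) (N : nat) : R :=
  lsum (seq 0 (length s)) (fun k => zeta_trunc q (firstn k s ++ (1 + nth k s 0%nat)%nat :: skipn (S k) s) N).
Definition RT (s : list nat) (N : nat) : R :=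
  lsum (seq 0 (length s)) (fun k => lsum (seq 0 (nth k s 0%nat - 1))
       (fun j => zeta_trunc q (firstn k s ++ (nth k s 0%nat - j)%nat :: (j + 1)%nat :: skipn (S k) s) N)).
Definition DD (s : list nat) (N : nat) : R :=
  match s with [] => 0 | b :: s'' => sm N (fun p => zterm q b p * zeta_trunc q s'' p * Phi N p) end.

Lemma zt_cons a s N : zeta_trunc q (a :: s) N = sm N (fun n => zterm q a n * zeta_trunc q s n).
Proof. reflexivity. Qed.

Lemma LT_cons a s N : LT (a :: s) N = zeta_trunc q (S a :: s) N + sm N (fun n => zterm q a n * LT s n).
Proof.
  unfold LT. cbn [length seq]. rewrite <- seq_shift. unfold lsum. cbn [map fold_right]. rewrite map_map.
  f_equal.
  erewrite (map_ext _ (fun x => sm N (fun n => zterm q a n * zeta_trunc q (firstn x s ++ (1 + nth x s 0%nat)%nat :: skipn (S x) s) n))).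
  2:{ intros x. reflexivity. }
  fold (lsum (seq 0 (length s)) (fun x => sm N (fun n => zterm q a n * zeta_trunc q (firstn x s ++ (1 + nth x s 0%nat)%nat :: skipn (S x) s) n))).
  rewrite lsum_sm. apply sm_ext. intros k Hk. rewrite lsum_scal. reflexivity.
Qed.

Lemma lsum_zt_cons a (l : list nat) (F : nat -> list nat) N :
  lsum l (fun j => zeta_trunc q (a :: F j) N) = sm N (fun n => zterm q a n * lsum l (fun j => zeta_trunc q (F j) n)).
Proof.
  induction l as [|x l IHl].
  - unfold lsum; simpl. rewrite (sm_ext N _ (fun _ => 0)) by (intros; ring). now rewrite sm_zero.
  - unfold lsum in *. cbn [map fold_right]. rewrite IHl, zt_cons, <- sm_plus. apply sm_ext. intros; ring.
Qed.

Lemma RT_cons a s N : RT (a :: s) N =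
  lsum (seq 0 (a - 1)) (fun j => zeta_trunc q ((a - j)%nat :: (j + 1)%nat :: s) N)
  + sm N (fun n => zterm q a n * RT s n).
Proof.
  unfold RT. cbn [length seq]. rewrite <- seq_shift. unfold lsum at 1. cbn [map fold_right]. rewrite map_map.
  f_equal.
  erewrite (map_ext _ (fun x => sm N (fun n => zterm q a n * lsum (seq 0 (nth x s 0%nat - 1))
       (fun j => zeta_trunc q (firstn x s ++ (nth x s 0%nat - j)%nat :: (j + 1)%nat :: skipn (S x) s) n)))).
  2:{ intros x. cbn [nth firstn app skipn]. apply lsum_zt_cons. }
  fold (lsum (seq 0 (length s)) (fun x => sm N (fun n => zterm q a n * lsum (seq 0 (nth x s 0%nat - 1))
       (fun j => zeta_trunc q (firstn x s ++ (nth x s 0%nat - j)%nat :: (j + 1)%nat :: skipn (S x) s) n)))).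
  rewrite lsum_sm. apply sm_ext. intros k Hk. rewrite lsum_scal. reflexivity.
Qed.

Lemma Main s : List.Forall (fun x => (1 <= x)%nat) s -> forall N, RT s N - LT s N = - DD s N.
Proof.
  induction s as [|a s IH]; intros Hs N.
  - unfold RT, LT, DD, lsum. simpl. lra.
  - inversion Hs as [|? ? Ha Hs']. subst.
    rewrite RT_cons, LT_cons.
    assert (E1 : sm N (fun n => zterm q a n * RT s n) - sm N (fun n => zterm q a n * LT s n)
                 = - sm N (fun n => zterm q a n * DD s n)).
    { rewrite <- sm_minus, <- sm_opp. apply sm_ext. intros k Hk.
      pose proof (IH Hs' k). nra. }
    assert (E2 : lsum (seq 0 (a - 1)) (fun j => zeta_trunc q ((a - j)%nat :: (j + 1)%nat :: s) N)
        = sm N (fun n => sm n (fun p => lsum (seq 0 (a - 1)) (fun j => zterm q (a - j) n * zterm q (j + 1) p) * zeta_trunc q s p))).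
    { transitivity (lsum (seq 0 (a-1)) (fun j => sm N (fun n => sm n (fun p => zterm q (a-j) n * zterm q (j+1) p * zeta_trunc q s p)))).
      - unfold lsum; f_equal; apply map_ext; intros j. rewrite zt_cons. apply sm_ext; intros k Hk.
        rewrite zt_cons, <- sm_scal. apply sm_ext; intros; ring.
      - rewrite lsum_sm. apply sm_ext; intros k Hk. rewrite lsum_sm. apply sm_ext; intros m Hm.
        rewrite lsum_scalr. reflexivity. }
    rewrite E2.
    assert (E3 : zeta_trunc q (S a :: s) N = sm N (fun n => zterm q (S a) n * zeta_trunc q s n)) by reflexivity.
    rewrite E3.
    destruct s as [|b s''].
    + pose proof (GL a Ha (zeta_trunc q []) (fun _ => 0) (DD []) 1
        ltac:(intros n; simpl; rewrite sm_zero; ring)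
        ltac:(intros n; simpl; rewrite (sm_ext n _ (fun _ => 0)) by (intros; ring); now rewrite sm_zero) N) as G.
      cbn [DD] in *.
      assert (Z0 : sm N (fun n => zterm q a n * 0) = 0) by (rewrite (sm_ext N _ (fun _ => 0)) by (intros; ring); apply sm_zero).
      lra.
    + pose proof (GL a Ha (zeta_trunc q (b :: s'')) (fun p => zterm q b p * zeta_trunc q s'' p) (DD (b :: s'')) 0
        ltac:(intros n; rewrite zt_cons; ring)
        ltac:(intros n; reflexivity) N) as G.
      cbn [DD] in *. lra.
Qed.

Definition r : R := (1 + q) / 2.
Definition t : R := q / r.
Lemma r_pos : q < r /\ r < 1. Proof. unfold r; lra. Qed.
Lemma t_pos : 0 < t /\ t < 1.
Proof. unfold t, r. split. apply Rdiv_lt_0_compat; lra. apply Rcomplements.Rlt_div_l; lra. Qed.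
Lemma q_tr : q = t * r. Proof. unfold t, r. field. lra. Qed.

Lemma qr_split n p : (p <= n)%nat -> q ^ (n - p) * r ^ p = r ^ n * t ^ (n - p).
Proof. intros H. rewrite q_tr, Rpow_mult_distr.
  replace n with (n - p + p)%nat at 3 by lia. rewrite pow_add. ring. Qed.

Lemma geo_t n : sm n (fun p => t ^ (n - p)) <= 1 / (1 - t).
Proof.
  pose proof t_pos as [T0 T1].
  assert (U : 0 < 1 / (1 - t)) by (apply Rdiv_lt_0_compat; lra).
  assert (U1 : 1 / (1 - t) * (1 - t) = 1) by (field; lra).
  induction n as [| |n Hn IH] using sm_ind; [unfold sm; simpl; lra|unfold sm; simpl; lra|].
  rewrite smS by lia. rewrite (sm_ext n _ (fun p => t * t ^ (n - p))).
  2:{ intros k Hk. replace (S n - k)%nat with (S (n - k)) by lia. reflexivity. }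
  rewrite sm_scal. replace (S n - n)%nat with 1%nat by lia. simpl. nra.
Qed.

Lemma geo_r n : sm n (fun p => r ^ p) <= 1 / (1 - r).
Proof.
  pose proof r_pos as [R0 R1].
  assert (G : sm n (fun p => r ^ p) <= (1 - r ^ n) / (1 - r)).
  { induction n as [| |n Hn IH] using sm_ind; [unfold sm; simpl; apply Req_le; field; lra|unfold sm; simpl; apply Rmult_le_pos; [lra| apply Rlt_le, Rinv_0_lt_compat; lra]|].
    rewrite smS by lia. apply Rle_trans with ((1 - r ^ n) / (1 - r) + r ^ n); [lra|].
    apply Req_le. simpl. field. lra. }
  apply Rle_trans with (1 := G). assert (0 < r ^ n) by (apply pow_lt; lra).
  apply Rmult_le_compat_r. apply Rlt_le, Rinv_0_lt_compat; lra. lra.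
Qed.

Lemma Z_nonneg l n : 0 <= zeta_trunc q l n.
Proof.
  revert n. induction l as [|b l IH]; intros n; [simpl; lra|].
  rewrite zt_cons. rewrite <- (sm_zero n). apply sm_le. intros k Hk.
  pose proof (zterm_nonneg b k ltac:(lia)). pose proof (IH k). nra.
Qed.

Lemma Zbound l : exists C, 0 <= C /\ forall n, q ^ n * zeta_trunc q l n <= C * r ^ n.
Proof.
  pose proof r_pos as [R0 R1]. pose proof t_pos as [T0 T1].
  induction l as [|b l [C [HC IH]]].
  - exists 1. split; [lra|]. intros n. simpl. rewrite Rmult_1_r, Rmult_1_l. apply pow_incr. lra.
  - exists (C * (1 / (1 - t))). split.
    { apply Rmult_le_pos; [lra|]. apply Rlt_le, Rdiv_lt_0_compat; lra. }
    intros n. rewrite zt_cons, <- sm_scal.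
    apply Rle_trans with (sm n (fun p => C * r ^ n * t ^ (n - p))).
    + apply sm_le. intros k Hk.
      pose proof (zterm_nonneg b k ltac:(lia)). pose proof (zterm_le1 b k ltac:(lia)).
      pose proof (Z_nonneg l k). pose proof (IH k). pose proof (powq_pos (n - k)).
      pose proof (qr_split n k ltac:(lia)) as QS.
      replace (q ^ n) with (q ^ (n - k) * q ^ k) by (rewrite <- pow_add; f_equal; lia).
      replace (C * r ^ n * t ^ (n - k)) with (C * (q ^ (n - k) * r ^ k)) by (rewrite QS; ring).
      assert (A0 : 0 <= q ^ k * zeta_trunc q l k) by (apply Rmult_le_pos; [apply Rlt_le, powq_pos|lra]).
      assert (A1 : q ^ k * zeta_trunc q l k * zterm q b k <= q ^ k * zeta_trunc q l k).
      { rewrite <- (Rmult_1_r (q ^ k * zeta_trunc q l k)) at 2. apply Rmult_le_compat_l; lra. }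
      replace (q ^ (n - k) * q ^ k * (zterm q b k * zeta_trunc q l k)) with (q ^ (n - k) * (q ^ k * zeta_trunc q l k * zterm q b k)) by ring.
      replace (C * (q ^ (n - k) * r ^ k)) with (q ^ (n - k) * (C * r ^ k)) by ring.
      apply Rmult_le_compat_l; lra.
    + rewrite sm_scal. pose proof (geo_t n). assert (0 <= C * r ^ n) by (apply Rmult_le_pos; [lra|apply pow_le; lra]).
      rewrite (Rmult_comm C (1 / (1 - t))). nra.
Qed.

Lemma Zconv a l : (2 <= a)%nat -> ex_finite_lim_seq (zeta_trunc q (a :: l)).
Proof.
  intros Ha. destruct (Zbound l) as [C [HC HB]]. pose proof r_pos as [R0 R1].
  apply ex_finite_lim_seq_incr with (M := C * (1 / (1 - r))).
  - intros n. rewrite !zt_cons. destruct n as [|n]; [unfold sm; simpl; lra|].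
    rewrite (smS (S n)) by lia. pose proof (zterm_nonneg a (S n) ltac:(lia)). pose proof (Z_nonneg l (S n)). nra.
  - intros n. rewrite zt_cons. apply Rle_trans with (sm n (fun p => C * r ^ p)).
    + apply sm_le. intros k Hk. pose proof (zterm_leq a k Ha ltac:(lia)). pose proof (Z_nonneg l k). pose proof (HB k).
      apply Rle_trans with (q ^ k * zeta_trunc q l k); [apply Rmult_le_compat_r; lra|lra].
    + rewrite sm_scal. pose proof (geo_r n). apply Rmult_le_compat_l; [lra|exact H].
Qed.

Lemma HH_diff K p : (p <= K)%nat -> 0 <= HH K - HH (K - p) <= q ^ (K + 1 - p) / (1 - q).
Proof.
  induction p as [|p IH]; intros Hp.
  - replace (K - 0)%nat with K by lia. assert (0 < q ^ (K + 1 - 0) / (1 - q)) by (apply Rdiv_lt_0_compat; [apply powq_pos|lra]). lra.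
  - specialize (IH ltac:(lia)). replace (K - p)%nat with (S (K - S p)) in IH by lia. rewrite HH_S in IH.
    replace (S (K - S p)) with (K - p)%nat in IH by lia.
    pose proof (h_nonneg (K - p) ltac:(lia)). pose proof (h_le (K - p) ltac:(lia)).
    replace (K + 1 - p)%nat with (S (K - p)) in IH by lia. replace (K + 1 - S p)%nat with (K - p)%nat by lia.
    simpl in IH. replace (q * q ^ (K - p) / (1 - q)) with (q ^ (K - p) / (1 - q) - q ^ (K - p)) in IH by (field; lra).
    lra.
Qed.

Lemma Phi_bound N p : (1 <= p < N)%nat -> 0 <= Phi N p <= q ^ (N - p) / (1 - q).
Proof. intros H. unfold Phi. pose proof (HH_diff (N - 1) p ltac:(lia)).
  replace (N - 1 + 1 - p)%nat with (N - p)%nat in H0 by lia. exact H0. Qed.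

Lemma Derr s1 l : (2 <= s1)%nat -> is_lim_seq (DD (s1 :: l)) 0.
Proof.
  intros Hs. destruct (Zbound l) as [C [HC HB]]. pose proof r_pos as [R0 R1]. pose proof t_pos as [T0 T1].
  set (K := C * (1 / (1 - t)) / (1 - q)).
  apply is_lim_seq_le_le with (u := fun _ => 0) (w := fun N => K * r ^ N).
  - intros N. cbn [DD]. split.
    + rewrite <- (sm_zero N) at 1. apply sm_le. intros k Hk.
      pose proof (zterm_nonneg s1 k ltac:(lia)). pose proof (Z_nonneg l k). pose proof (Phi_bound N k Hk).
      apply Rmult_le_pos; [apply Rmult_le_pos|]; lra.
    + apply Rle_trans with (sm N (fun p => (C / (1 - q) * r ^ N) * t ^ (N - p))).
      * apply sm_le. intros k Hk.
        pose proof (zterm_nonneg s1 k ltac:(lia)). pose proof (zterm_leq s1 k Hs ltac:(lia)).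
        pose proof (Z_nonneg l k). pose proof (Phi_bound N k Hk) as [P0 P1]. pose proof (HB k).
        pose proof (qr_split N k ltac:(lia)) as QS. pose proof (powq_pos (N - k)).
        replace (C / (1 - q) * r ^ N * t ^ (N - k)) with (C / (1 - q) * (r ^ N * t ^ (N - k))) by ring.
        rewrite <- QS.
        replace (C / (1 - q) * (q ^ (N - k) * r ^ k)) with (C * r ^ k * (q ^ (N - k) / (1 - q))) by (field; lra).
        apply Rle_trans with (q ^ k * zeta_trunc q l k * Phi N k).
        { apply Rmult_le_compat_r; [lra|]. apply Rmult_le_compat_r; lra. }
        apply Rle_trans with (q ^ k * zeta_trunc q l k * (q ^ (N - k) / (1 - q))).
        { apply Rmult_le_compat_l; [|lra]. pose proof (powq_pos k). nra. }
        apply Rmult_le_compat_r; [|lra]. apply Rlt_le, Rdiv_lt_0_compat; lra.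
      * rewrite sm_scal. pose proof (geo_t N). unfold K.
        assert (0 <= C / (1 - q) * r ^ N).
        { apply Rmult_le_pos; [apply Rmult_le_pos; [lra|apply Rlt_le, Rinv_0_lt_compat; lra]|apply pow_le; lra]. }
        replace (C * (1 / (1 - t)) / (1 - q) * r ^ N) with (C / (1 - q) * r ^ N * (1 / (1 - t))) by (field; lra).
        apply Rmult_le_compat_l; lra.
  - apply is_lim_seq_const.
  - replace (Finite 0) with (Rbar_mult K 0) by (simpl; f_equal; ring).
    apply is_lim_seq_scal_l. apply is_lim_seq_geom. rewrite Rabs_pos_eq; lra.
Qed.
End Q.

Lemma lim_of_conv (u : nat -> R) : ex_finite_lim_seq u -> is_lim_seq u (real (Lim_seq u)).
Proof. intros [l Hl]. rewrite (is_lim_seq_unique _ _ Hl). exact Hl. Qed.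

Lemma lim_lsum (l : list nat) (f : nat -> nat -> R) (g : nat -> R) :
  (forall x, In x l -> is_lim_seq (fun N => f x N) (g x)) ->
  is_lim_seq (fun N => lsum l (fun x => f x N)) (lsum l g).
Proof.
  induction l as [|x l IH]; intros H.
  - unfold lsum; simpl. apply is_lim_seq_const.
  - unfold lsum in *; simpl. apply is_lim_seq_plus'.
    + apply H. now left.
    + apply IH. intros y Hy. apply H. now right.
Qed.

Lemma lim_uniq (u : nat -> R) (l1 l2 : R) : is_lim_seq u l1 -> is_lim_seq u l2 -> l1 = l2.
Proof. intros H1 H2. apply is_lim_seq_unique in H1. apply is_lim_seq_unique in H2.
  rewrite H1 in H2. now injection H2. Qed.

Theorem corollary4p3 (q : R) (s : list nat)
  (hq0 : 0 < q) (hq1 : q < 1)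
  (hpos : List.Forall (fun x => (1 <= x)%nat) s)
  (hne : s <> [])
  (h1 : (1 < hd 0%nat s)%nat) :
  lsum (seq 0 (length s))
    (fun k => qzeta q (firstn k s ++ (1 + nth k s 0%nat)%nat :: skipn (S k) s))
  = lsum (seq 0 (length s))
    (fun k => lsum (seq 0 (nth k s 0%nat - 1))
       (fun j => qzeta q (firstn k s ++ (nth k s 0%nat - j)%nat :: (j + 1)%nat :: skipn (S k) s))).
Proof.
  destruct s as [|a s0]; [congruence|]. simpl in h1.
  assert (HLT : is_lim_seq (LT q (a :: s0)) (lsum (seq 0 (length (a :: s0)))
    (fun k => qzeta q (firstn k (a :: s0) ++ (1 + nth k (a :: s0) 0%nat)%nat :: skipn (S k) (a :: s0))))).
  { unfold LT. apply lim_lsum. intros k Hk. unfold qzeta. apply lim_of_conv.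
    destruct k as [|k]; cbn [firstn app nth skipn].
    - apply (Zconv q hq0 hq1); lia.
    - apply (Zconv q hq0 hq1); lia. }
  assert (HRT : is_lim_seq (RT q (a :: s0)) (lsum (seq 0 (length (a :: s0)))
    (fun k => lsum (seq 0 (nth k (a :: s0) 0%nat - 1))
       (fun j => qzeta q (firstn k (a :: s0) ++ (nth k (a :: s0) 0%nat - j)%nat :: (j + 1)%nat :: skipn (S k) (a :: s0)))))).
  { unfold RT. apply lim_lsum. intros k Hk. apply lim_lsum. intros j Hj. unfold qzeta. apply lim_of_conv.
    destruct k as [|k]; cbn [firstn app nth skipn] in *.
    - apply in_seq in Hj. apply (Zconv q hq0 hq1); lia.
    - apply (Zconv q hq0 hq1); lia. }
  assert (HD := Derr q hq0 hq1 a s0 ltac:(lia)).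
  assert (HRT2 : is_lim_seq (RT q (a :: s0)) (lsum (seq 0 (length (a :: s0)))
    (fun k => qzeta q (firstn k (a :: s0) ++ (1 + nth k (a :: s0) 0%nat)%nat :: skipn (S k) (a :: s0))) - 0)).
  { eapply is_lim_seq_ext; [|apply (is_lim_seq_minus' _ _ _ _ HLT HD)].
    intros N. pose proof (Main q hq0 hq1 (a :: s0) hpos N). lra. }
  pose proof (lim_uniq _ _ _ HRT HRT2) as E.
  match goal with |- ?Y = ?X => transitivity (Y - 0); [ring| symmetry; exact E] end.
Qed.
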